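(* For $\xi = (\tau_L,\delta_L,\tau_R,\delta_R) \in \mathbb{R}^4$ let $$f_\xi(x,y) = \begin{cases} (\tau_L x + y + 1,\ -\delta_L x), & x \le 0,\\ (\tau_R x + y + 1,\ -\delta_R x), & x \ge 0,\end{cases}$$ and let $\Phi = \{\xi : \tau_L > |\delta_L + 1|,\ \tau_R < -|\delta_R+1|\}$. For $\xi\in\Phi$, the matrix $\begin{bmatrix}\tau_L & 1\\ -\delta_L & 0\end{bmatrix}$ has eigenvalues $\lambda_L^s,\lambda_L^u$ with $|\lambda_L^s|<1<\lambda_L^u$, and $\begin{bmatrix}\tau_R & 1\\ -\delta_R & 0\end{bmatrix}$ has eigenvalues $\lambda_R^s,\lambda_R^u$ with $|\lambda_R^s|<1$, $\lambda_R^u<-1$. Let $$\phi^+(\xi) = \delta_R - \big(\tau_R + \delta_L + \delta_R - (1+\tau_R)\lambda_L^u\big)\lambda_L^u,\qquad \phi^-(\xi) = \delta_R - \big(\delta_R + \tau_R - (1+\lambda_R^u)\lambda_L^u\big)\lambda_L^u,$$ $\phi_{\min}(\xi) = \min[\phi^+(\xi),\phi^-(\xi)]$, and $T = \left(\frac{1}{1-\lambda_R^s}, 0\right)$. If $\xi \in \Phi$ with $\phi_{\min}(\xi) > 0$ and $\lambda_L^s = \lambda_R^s$, then $f_\xi$ maps the line segment from $T$ to $f_\xi(T)$ into itself, and on this segment $f_\xi$ is conjugate to the skew tent map $$z \mapsto \begin{cases} \lambda_L^u z + 1, & z \le 0,\\ \lambda_R^u z + 1, & z \ge 0,\end{cases}$$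 restricted to the interval $[\lambda_R^u + 1, 1]$. *)

(* Defs.v *)
From Stdlib Require Import Reals Lra.
Open Scope R_scope.

Definition f_xi (tauL deltaL tauR deltaR : R) (p : R * R) : R * R :=
  let (x, y) := p in
  if Rle_dec x 0 then (tauL * x + y + 1, - deltaL * x)
  else (tauR * x + y + 1, - deltaR * x).

Definition in_Phi (tauL deltaL tauR deltaR : R) : Prop :=
  tauL > Rabs (deltaL + 1) /\ tauR < - Rabs (deltaR + 1).

Definition is_eigenvalue2 (a b c d lam : R) : Prop :=
  exists v1 v2 : R, (v1 <> 0 \/ v2 <> 0) /\
    a * v1 + b * v2 = lam * v1 /\ c * v1 + d * v2 = lam * v2.

Definition phi_plus (tauL deltaL tauR deltaR lamLu : R) : R :=
  deltaR - (tauR + deltaL + deltaR - (1 + tauR) * lamLu) * lamLu.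

Definition phi_minus (tauL deltaL tauR deltaR lamLu lamRu : R) : R :=
  deltaR - (deltaR + tauR - (1 + lamRu) * lamLu) * lamLu.

Definition skew_tent (lamLu lamRu z : R) : R :=
  if Rle_dec z 0 then lamLu * z + 1 else lamRu * z + 1.

Definition segment (P Q : R * R) (p : R * R) : Prop :=
  exists s : R, 0 <= s <= 1 /\
    p = (fst P + s * (fst Q - fst P), snd P + s * (snd Q - snd P)).

Definition continuous_on_interval (a b : R) (h : R -> R * R) : Prop :=
  forall z, a <= z <= b -> forall eps, eps > 0 -> exists del, del > 0 /\
    forall w, a <= w <= b -> Rabs (w - z) < del ->
      Rabs (fst (h w) - fst (h z)) < eps /\ Rabs (snd (h w) - snd (h z)) < eps.

(* Main.v *)
Require Import Defs.
From Stdlib Require Import Reals Lra Psatz.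
Open Scope R_scope.

Lemma eig_eq (a c lam : R) : is_eigenvalue2 a 1 c 0 lam -> lam*lam - a*lam - c = 0.
Proof.
  intros [v1 [v2 [Hnz [H1 H2]]]].
  destruct (Req_dec v1 0) as [E|E].
  - subst v1. exfalso. destruct Hnz as [Hn|Hn]; [lra|]. apply Hn. lra.
  - assert (Hv2 : v2 = (lam - a) * v1) by lra.
    subst v2.
    assert (Hp : (lam*lam - a*lam - c) * v1 = 0) by lra.
    destruct (Rmult_integral _ _ Hp) as [Hq|Hq]; [exact Hq|contradiction].
Qed.

Lemma vieta (t d s u : R) : is_eigenvalue2 t 1 (-d) 0 s -> is_eigenvalue2 t 1 (-d) 0 u ->
  s <> u -> t = s + u /\ d = s * u.
Proof.
  intros Hs Hu Hne. apply eig_eq in Hs. apply eig_eq in Hu.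
  assert (Hp : (s - u) * (s + u - t) = 0) by lra.
  destruct (Rmult_integral _ _ Hp) as [Hq|Hq]; [exfalso; apply Hne; lra|].
  split; [lra|]. assert (t = s + u) by lra. subst t. nra.
Qed.

Theorem proposition10p1
  (tauL deltaL tauR deltaR lamLs lamLu lamRs lamRu : R) :
  in_Phi tauL deltaL tauR deltaR ->
  is_eigenvalue2 tauL 1 (- deltaL) 0 lamLs ->
  is_eigenvalue2 tauL 1 (- deltaL) 0 lamLu ->
  Rabs lamLs < 1 -> 1 < lamLu ->
  is_eigenvalue2 tauR 1 (- deltaR) 0 lamRs ->
  is_eigenvalue2 tauR 1 (- deltaR) 0 lamRu ->
  Rabs lamRs < 1 -> lamRu < -1 ->
  Rmin (phi_plus tauL deltaL tauR deltaR lamLu)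
       (phi_minus tauL deltaL tauR deltaR lamLu lamRu) > 0 ->
  lamLs = lamRs ->
  let f := f_xi tauL deltaL tauR deltaR in
  let T := (1 / (1 - lamRs), 0) in
  (* f maps the segment [T, f T] into itself *)
  (forall p, segment T (f T) p -> segment T (f T) (f p)) /\
  (* and on it f is conjugate to the skew tent map on [lamRu + 1, 1] *)
  (exists h : R -> R * R,
     continuous_on_interval (lamRu + 1) 1 h /\
     (forall z w, lamRu + 1 <= z <= 1 -> lamRu + 1 <= w <= 1 -> h z = h w -> z = w) /\
     (forall p, segment T (f T) p <-> exists z, lamRu + 1 <= z <= 1 /\ h z = p) /\
     (forall z, lamRu + 1 <= z <= 1 ->
        lamRu + 1 <= skew_tent lamLu lamRu z <= 1 /\
        f (h z) = h (skew_tent lamLu lamRu z))).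
Proof.
  intros _ HLs HLu HaLs HLu1 HRs HRu HaRs HRu1 Hmin Heq f T.
  subst lamLs.
  set (s := lamRs) in *.
  assert (Hs : -1 < s < 1).
  { unfold Rabs in HaRs. destruct (Rcase_abs s); lra. }
  destruct (vieta _ _ _ _ HLs HLu ltac:(lra)) as [EtL EdL].
  destruct (vieta _ _ _ _ HRs HRu ltac:(lra)) as [EtR EdR].
  set (u := lamLu) in *. set (r := lamRu) in *.
  assert (Hphi : phi_minus tauL deltaL tauR deltaR u r > 0).
  { pose proof (Rmin_r (phi_plus tauL deltaL tauR deltaR u)
       (phi_minus tauL deltaL tauR deltaR u r)). lra. }
  unfold phi_minus in Hphi. rewrite EtR, EdR in Hphi.
  assert (Hg : (1 + r) * u - r > 0).
  { assert (E : s * r - (s * r + (s + r) - (1 + r) * u) * u = (u - s) * ((1 + r) * u - r)) by ring.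
    rewrite E in Hphi.
    destruct (Rle_dec ((1 + r) * u - r) 0) as [Hle|Hgt]; [|lra].
    exfalso. assert (0 <= u - s) by lra. nra. }
  set (h := fun z => (z / (1 - s), s * (1 - z) / (1 - s))).
  assert (Hk : 1 - s > 0) by lra.
  assert (Hconj : forall z, r + 1 <= z <= 1 ->
        r + 1 <= skew_tent u r z <= 1 /\ f (h z) = h (skew_tent u r z)).
  { intros z Hz.
    assert (Hx : z / (1 - s) * (1 - s) = z) by (field; lra).
    unfold f, f_xi, skew_tent, h.
    destruct (Rle_dec z 0) as [Hz0|Hz0];
    destruct (Rle_dec (z / (1 - s)) 0) as [Hx0|Hx0].
    - split; [split; nra|].
      f_equal; [rewrite EtL|rewrite EdL]; field; lra.
    - exfalso. nra.
    - exfalso. nra.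
    - split; [split; nra|].
      f_equal; [rewrite EtR|rewrite EdR]; field; lra. }
  assert (Hh1 : h 1 = T).
  { unfold h, T. f_equal; field; lra. }
  assert (HfT : f T = h (r + 1)).
  { rewrite <- Hh1. destruct (Hconj 1 ltac:(lra)) as [_ E]. rewrite E.
    unfold skew_tent. destruct (Rle_dec 1 0); [lra|]. f_equal; ring. }
  assert (Hseg : forall p, segment T (f T) p <-> exists z, r + 1 <= z <= 1 /\ h z = p).
  { intros p. rewrite HfT. rewrite <- Hh1. unfold segment. split.
    - intros [a [Ha Hp]]. exists (1 + a * r). split; [split; nra|].
      rewrite Hp. unfold h; simpl. f_equal; field; lra.
    - intros [z [Hz Hp]]. exists ((z - 1) / r).
      assert (E : (z - 1) / r * r = z - 1) by (field; lra).
      split; [split; nra|].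
      rewrite <- Hp. unfold h; simpl. f_equal; field; lra. }
  split.
  - intros p Hp. apply Hseg in Hp. destruct Hp as [z [Hz Hp]].
    apply Hseg. destruct (Hconj z Hz) as [Hr E].
    exists (skew_tent u r z). split; [exact Hr|]. rewrite <- Hp. symmetry. exact E.
  - exists h. split; [|split; [|split; [exact Hseg|exact Hconj]]].
    + intros z Hz eps Heps. exists (eps * (1 - s)). split; [nra|].
      intros w Hw Hwz. unfold h; simpl.
      set (k := 1 / (1 - s)).
      assert (Hk1 : k * (1 - s) = 1) by (unfold k; field; lra).
      assert (Hkp : k > 0) by (unfold k; apply Rdiv_lt_0_compat; lra).
      replace (w / (1 - s) - z / (1 - s)) with ((w - z) * k) by (unfold k; field; lra).
      replace (s * (1 - w) / (1 - s) - s * (1 - z) / (1 - s)) with ((w - z) * (-s * k))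
        by (unfold k; field; lra).
      rewrite !Rabs_mult, Rabs_Ropp, (Rabs_right k) by lra.
      assert (Habs : Rabs s < 1) by exact HaRs.
      pose proof (Rabs_pos (w - z)). pose proof (Rabs_pos s).
      assert (B : Rabs (w - z) * k < eps).
      { assert (Rabs (w - z) * k < eps * (1 - s) * k) by (apply Rmult_lt_compat_r; lra).
        replace (eps * (1 - s) * k) with eps in H1 by (rewrite Rmult_assoc, (Rmult_comm (1 - s)), Hk1; ring).
        exact H1. }
      split; [exact B|].
      assert (Rabs s * k <= k) by nra.
      assert (Rabs (w - z) * (Rabs s * k) <= Rabs (w - z) * k) by (apply Rmult_le_compat_l; lra).
      lra.
    + intros z w Hz Hw E. apply (f_equal fst) in E. unfold h in E; simpl in E.
      assert (z = z / (1 - s) * (1 - s)) by (field; lra).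
      assert (w = w / (1 - s) * (1 - s)) by (field; lra).
      nra.
Qed.
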